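(* Let $A=(Q,q_0,\Sigma,\delta,\alpha)$ with $Q_d$ be an LDBA and $\mathsf{Ord}$ an ordering of its states w.r.t. $Q_d$, and let $B$ be the deterministic parity automaton constructed from $A$ and $\mathsf{Ord}$ as described in the context. Then $\mathsf L(A)=\mathsf L(B)$.
   Context: A (transition-based) nondeterministic Büchi automaton is $A=(Q,q_0,\Sigma,\delta,\alpha)$ with finite $Q$, $q_0\in Q$, finite alphabet $\Sigma$, total $\delta\subseteq Q\times\Sigma\times Q$, accepting transitions $\alpha\subseteq\delta$; a run is accepting if it uses transitions of $\alpha$ infinitely often, and $\mathsf L(A)$ is the set of words with an accepting run. An LDBA additionally has $Q_d\subseteq Q$ with (1) $\alpha\subseteq Q_d\times\Sigma\times Q_d$; (2) each $q\in Q_d$ has exactly one $\sigma$-successor $\delta(q,\sigma)$ for each $\sigma$; (3) successors of states in $Q_d$ lie in $Q_d$. Assume $q_0\notin Q_d$ and write $\overline{Q_d}=Q\setminus Q_d$. For $S\subseteq Q$, $\mathsf{post}^\sigma_\delta(S)=\{q'\mid\exists q\in S:(q,\sigma,q')\in\delta\}$. An ordering w.r.t. $Q_d$ is $\mathsf{Ord}:Q\to\{1,\dots,|Q_d|,+\infty\}$ with value $+\infty$ exactly on $\overline{Q_d}$ and injective on $Q_d$. A deterministic parity automaton (DPA) $(Q',q_0',\Sigma,\delta',p)$ has a deterministic total transition function and a coloring $p$ assigning an integer to each transition; a word is accepted iff on its (unique) run the minimal color occurring infinitely often is even. For a finite set $S$, $\mathcal{OP}(S)$ is the set of pairs $(t,<)$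 with $t\subseteq S$ and $<$ a strict total order on $t$; $\mathsf{Ind}_{(t,<)}(e)$ is the position of $e\in t$ in $<$ (minimum has index 1). The DPA $B=(Q^B,q^B_0,\Sigma,\delta^B,p)$: $Q^B=\mathcal P(\overline{Q_d})\times\mathcal{OP}(Q_d)$, $q^B_0=(\{q_0\},(\emptyset,\emptyset))$. For a state $(s_1,(t_1,<_1))$ and $\sigma\in\Sigma$, $\delta^B((s_1,(t_1,<_1)),\sigma)=(s_2,(t_2,<_2))$ where $s_2=\mathsf{post}^\sigma_\delta(s_1)\cap\overline{Q_d}$, $t_2=\mathsf{post}^\sigma_\delta(s_1\cup t_1)\cap Q_d$, and for $q_1,q_2\in t_2$, $q_1<_2q_2$ iff one of: (a) neither $q_1$ nor $q_2$ equals $\delta(q',\sigma)$ for any $q'\in t_1$, and $\mathsf{Ord}(q_1)<\mathsf{Ord}(q_2)$; (b) $q_1=\delta(q_1',\sigma)$ for some $q_1'\in t_1$ but $q_2$ is not $\delta(q',\sigma)$ for any $q'\in t_1$; (c) both have such predecessors in $t_1$ and $\min_{<_1}\{q'\in t_1\mid\delta(q',\sigma)=q_1\}<_1\min_{<_1}\{q'\in t_1\mid\delta(q',\sigma)=q_2\}$. Coloring of this transition: let $\mathsf{Dec}(t_1)=\{q\in t_1\mid \mathsf{Ind}_{(t_2,<_2)}(\delta(q,\sigma))<\mathsf{Ind}_{(t_1,<_1)}(q)\}$ and $\mathsf{Acc}(t_1)=\{q\in t_1\mid\exists q'\in t_2:(q,\sigma,q')\in\alpha\}$. The color is: if $\mathsf{Dec}(t_1)=\emptyset\ne\mathsf{Acc}(t_1)$: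 $2\min_{q\in\mathsf{Acc}(t_1)}\mathsf{Ind}_{(t_1,<_1)}(q)$; if $\mathsf{Dec}(t_1)\ne\emptyset=\mathsf{Acc}(t_1)$: $2\min_{q\in\mathsf{Dec}(t_1)}\mathsf{Ind}_{(t_1,<_1)}(q)-1$; if both nonempty: the minimum of these two values; if both empty: $2|Q_d|+1$. *)

(* Defs.v *)
From mathcomp Require Import all_boot.
Set Implicit Arguments. Unset Strict Implicit. Unset Printing Implicit Defensive.

Section Automata.
Variables (Q Sigma : finType).

Definition word := nat -> Sigma.

Definition total_rel (delta : Q -> Sigma -> Q -> bool) : Prop :=
  forall q a, exists q', delta q a q'.

Definition NBA_run (q0 : Q) (delta : Q -> Sigma -> Q -> bool) (w : word)
  (r : nat -> Q) : Prop :=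
  r 0 = q0 /\ forall i, delta (r i) (w i) (r i.+1).

Definition NBA_accepting_run (alpha : Q -> Sigma -> Q -> bool) (w : word)
  (r : nat -> Q) : Prop :=
  forall N, exists i, N <= i /\ alpha (r i) (w i) (r i.+1).

Definition NBA_accepts q0 delta alpha (w : word) : Prop :=
  exists r, NBA_run q0 delta w r /\ NBA_accepting_run alpha w r.

Definition is_LDBA (q0 : Q) (delta alpha : Q -> Sigma -> Q -> bool)
  (Qd : {set Q}) : Prop :=
  [/\ total_rel delta /\ (forall q a q', alpha q a q' -> delta q a q'),
      (forall q a q', alpha q a q' -> q \in Qd /\ q' \in Qd),
      (forall q a, q \in Qd -> exists q', forall q'', delta q a q'' <-> q'' = q'),
      (forall q a q', q \in Qd -> delta q a q' -> q' \in Qd)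
    & q0 \notin Qd].

(** Ord : Q -> {1..|Qd|, +oo}, with None standing for +oo. *)
Definition is_ordering (Qd : {set Q}) (Ord : Q -> option nat) : Prop :=
  [/\ (forall q, Ord q = None <-> q \notin Qd),
      (forall q, q \in Qd -> exists n, Ord q = Some n /\ 1 <= n <= #|Qd|)
    & (forall q1 q2, q1 \in Qd -> q2 \in Qd -> Ord q1 = Ord q2 -> q1 = q2)].

Definition ordlt (o1 o2 : option nat) : bool :=
  match o1, o2 with
  | Some m, Some n => m < n
  | Some _, None => true
  | None, _ => false
  end.

(** The deterministic successor delta(q, a) (meaningful for q in Qd, where it
    is unique). *)
Definition dsucc (delta : Q -> Sigma -> Q -> bool) (q : Q) (a : Sigma) : Q :=
  odflt q [pick q' | delta q a q'].

Definition post (delta : Q -> Sigma -> Q -> bool) (S : {set Q}) (a : Sigma)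
  : {set Q} := [set q' | [exists q in S, delta q a q']].

Record DPA (S : Type) := MkDPA {
  dpa_init : S;
  dpa_trans : S -> Sigma -> S;
  dpa_color : S -> Sigma -> nat }.

Fixpoint dpa_run S (B : DPA S) (w : word) (i : nat) : S :=
  match i with
  | 0 => dpa_init B
  | i'.+1 => dpa_trans B (dpa_run B w i') (w i')
  end.

Definition dpa_color_at S (B : DPA S) (w : word) (i : nat) : nat :=
  dpa_color B (dpa_run B w i) (w i).

Definition inf_often_color S (B : DPA S) (w : word) (c : nat) : Prop :=
  forall N, exists i, N <= i /\ dpa_color_at B w i = c.

Definition DPA_accepts S (B : DPA S) (w : word) : Prop :=
  exists c, [/\ inf_often_color B w c,
                (forall c', inf_often_color B w c' -> c <= c') & ~~ odd c].

(** A state (s, (t, <)) is represented as a pair (s, l) where l : seq Q is the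
    (duplicate-free) list of the elements of t in increasing <-order; thus
    t = elements of l, and Ind_(t,<)(e) = index e l + 1. *)
Definition Bstate := ({set Q} * seq Q)%type.

Section Construction.
Variables (delta alpha : Q -> Sigma -> Q -> bool) (Qd : {set Q})
          (Ord : Q -> option nat).

Definition t_of (l : seq Q) : {set Q} := [set q in l].

Definition haspred (l1 : seq Q) (a : Sigma) (q : Q) : bool :=
  has (fun q' => dsucc delta q' a == q) l1.

(** index (w.r.t. <1) of min_{<1} {q' in t1 | delta(q', a) = q} *)
Definition minpred (l1 : seq Q) (a : Sigma) (q : Q) : nat :=
  find (fun q' => dsucc delta q' a == q) l1.

Definition lt2 (l1 : seq Q) (a : Sigma) (q1 q2 : Q) : bool :=
  [|| [&& ~~ haspred l1 a q1, ~~ haspred l1 a q2 & ordlt (Ord q1) (Ord q2)],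
      haspred l1 a q1 && ~~ haspred l1 a q2
    | [&& haspred l1 a q1, haspred l1 a q2 & minpred l1 a q1 < minpred l1 a q2]].

Definition B_trans (st : Bstate) (a : Sigma) : Bstate :=
  let: (s1, l1) := st in
  let s2 := post delta s1 a :\: Qd in
  let t2 := post delta (s1 :|: t_of l1) a :&: Qd in
  (s2, sort (fun x y => (x == y) || lt2 l1 a x y) (enum t2)).

Definition B_color (st : Bstate) (a : Sigma) : nat :=
  let: (s1, l1) := st in
  let: (_, l2) := B_trans st a in
  let t2 := t_of l2 in
  let Dec := fun q => index (dsucc delta q a) l2 < index q l1 in
  let Acc := fun q => [exists q' in t2, alpha q a q'] in
  (* 2 * min_{q in Acc} Ind(q)  and  2 * min_{q in Dec} Ind(q) - 1 *)
  let accv := 2 * (find Acc l1).+1 in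
  let decv := 2 * (find Dec l1).+1 - 1 in
  match has Dec l1, has Acc l1 with
  | false, true => accv
  | true, false => decv
  | true, true => minn accv decv
  | false, false => 2 * #|Qd| + 1
  end.

Definition B_DPA (q0 : Q) : DPA Bstate :=
  MkDPA ([set q0], [::]) B_trans B_color.

End Construction.
End Automata.

(* Main.v *)
Require Import Defs.
From mathcomp Require Import all_boot zify.
From Stdlib Require Import Classical.
Set Implicit Arguments. Unset Strict Implicit. Unset Printing Implicit Defensive.

Lemma index_count (T : eqType) (lt : rel T) (s : seq T) x :
  irreflexive lt -> transitive lt ->
  sorted (fun a b => (a == b) || lt a b) s -> uniq s -> x \in s ->
  index x s = count (lt ^~ x) s.
Proof.
move=> Hirr Htr.
have Hle : transitive (fun a b => (a == b) || lt a b).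
  move=> y a b /orP[/eqP->//|H1] /orP[/eqP<-|H2]; first by rewrite H1 orbT.
  by rewrite (Htr _ _ _ H1 H2) orbT.
rewrite (sorted_pairwise Hle).
elim: s => // y s IH /= /andP[Hall Hp] /andP[Hy Hu].
rewrite inE; case: (eqVneq x y) => [->|Hne] /= => [_|Hx].
  rewrite ?eqxx Hirr /= ?add0n; symmetry; apply/eqP; rewrite -leqn0 leqNgt -has_count.
  apply/hasPn => z Hz /=; have := allP Hall z Hz => /orP[/eqP Ez|Hyz].
    by move: Hy; rewrite Ez Hz.
  by apply/negP => Hzy; move: (Hirr y); rewrite (Htr _ _ _ Hyz Hzy).
rewrite IH //.
have := allP Hall x Hx => /orP[/eqP E|->]; first by rewrite E eqxx in Hne.
by rewrite add1n.
Qed.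

Lemma count_mem_undup (T : eqType) (s S : seq T) :
  uniq s -> {subset S <= s} -> count (mem S) s = size (undup S).
Proof.
move=> Hu Hsub; rewrite -size_filter; apply: perm_size; apply: uniq_perm.
- exact: filter_uniq.
- exact: undup_uniq.
move=> z; rewrite mem_filter mem_undup; apply/andP/idP => [[]//|Hz]; split => //.
exact: Hsub.
Qed.

Lemma find_le_index (T : eqType) (P : pred T) s q :
  P q -> q \in s -> find P s <= index q s.
Proof.
move=> Hq; elim: s => //= y s IH; rewrite inE.
case: (eqVneq y q) => [->|Hne] /=; first by rewrite Hq.
move/IH; case: (P y) => //.
Qed.

Lemma has_take_gen (T : Type) (P : pred T) s m :
  has P (take m s) = has P s && (find P s < m).
Proof.
case Hh: (has P s) => /=; first by rewrite has_take.
apply/negbTE; apply: contraFN Hh; rewrite -{2}(cat_take_drop m s) has_cat => ->.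
by [].
Qed.

Lemma not_uniq_take (T : eqType) (s : seq T) n : ~~ uniq (take n s) -> ~~ uniq s.
Proof. apply: contra; rewrite -{1}(cat_take_drop n s) cat_uniq => /andP[]//. Qed.

Definition io (f : nat -> nat) c := forall N, exists i, N <= i /\ f i = c.

Lemma ev_ge f k : (forall c, c < k -> ~ io f c) -> exists K, forall n, K <= n -> k <= f n.
Proof.
elim: k => [|k IH] H; first by exists 0.
case: IH => [c Hc|K HK]; first by apply: H; lia.
have := H k (ltnSn k); move/not_all_ex_not => [N HN].
exists (maxn K N) => n Hn.
have := HK n (leq_trans (leq_maxl _ _) Hn); rewrite leq_eqVlt; case/orP => // /eqP Hk.
by exfalso; apply: HN; exists n; split => //; lia.
Qed.

Lemma io_min f c : io f c -> exists m, io f m /\ forall c', io f c' -> m <= c'.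
Proof.
suff: forall n c, c <= n -> io f c -> exists m, io f m /\ forall c', io f c' -> m <= c'.
  by move=> H; apply: (H c).
elim=> [|n IH] c0 Hc Hio.
  exists c0; split => // c' _; lia.
case: (classic (exists c', c' < c0 /\ io f c')) => [[c' [H1 H2]]|Hn].
  by apply: (IH c') => //; lia.
exists c0; split => // c' Hc'; rewrite leqNgt; apply/negP => Hlt.
by apply: Hn; exists c'.
Qed.

Lemma stab (f : nat -> nat) k : (forall n, k <= n -> f n.+1 <= f n) ->
  exists K, k <= K /\ forall n, K <= n -> f n = f K.
Proof.
suff: forall v k, f k <= v -> (forall n, k <= n -> f n.+1 <= f n) ->
  exists K, k <= K /\ forall n, K <= n -> f n = f K.
  by move=> H Hm; apply: (H (f k)).
elim=> [|v IH] k0 Hv Hm;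
  (have mono: forall m, k0 <= m -> f m <= f k0 by
     elim=> [|m IHm]; [rewrite leqn0 => /eqP->//|
     rewrite leq_eqVlt => /orP[/eqP<-//|H]; exact: leq_trans (Hm m H) (IHm H)]).
  exists k0; split => // n Hn; have := mono n Hn; lia.
case: (classic (forall n, k0 <= n -> f n = f k0)) => [H|].
  by exists k0.
move/not_all_ex_not => [n Hn].
case: (leqP k0 n) => Hkn; last by exfalso; apply: Hn => H; lia.
have Hlt : f n < f k0.
  have := mono n Hkn; rewrite leq_eqVlt => /orP[/eqP E|//]; by exfalso; apply: Hn.
have [K [HK1 HK2]] := IH n ltac:(lia) (fun m Hm' => Hm m ltac:(lia)).
exists K; split => //; lia.
Qed.

Section Step.
Variables (Q Sigma : finType) (delta alpha : Q -> Sigma -> Q -> bool) (Qd : {set Q})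
  (Ord : Q -> option nat).
Hypothesis tot : total_rel delta.
Hypothesis det : forall q a, q \in Qd -> exists q', forall q'', delta q a q'' <-> q'' = q'.
Hypothesis clos : forall q a q', q \in Qd -> delta q a q' -> q' \in Qd.
Hypothesis OrdNone : forall q, Ord q = None <-> q \notin Qd.
Hypothesis Ordinj : forall q1 q2, q1 \in Qd -> q2 \in Qd -> Ord q1 = Ord q2 -> q1 = q2.

Lemma ds_delta q a : delta q a (dsucc delta q a).
Proof.
rewrite /dsucc; case: pickP => [x /= Hx // | H].
by case: (tot q a) => x Hx; move: (H x); rewrite Hx.
Qed.

Lemma ds_det q a q' : q \in Qd -> delta q a q' -> q' = dsucc delta q a.
Proof.
move=> Hq Hd; case: (det a Hq) => x Hx.
by rewrite (proj1 (Hx _) Hd) (proj1 (Hx _) (ds_delta q a)).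
Qed.

Lemma ordlt_irr o : ordlt o o = false.
Proof. by case: o => //= n; rewrite ltnn. Qed.

Lemma ordlt_trans : transitive ordlt.
Proof. by move=> [m|] [n|] [k|] //=; apply: ltn_trans. Qed.

Lemma lt2_irr l a : irreflexive (lt2 delta Ord l a).
Proof. move=> x; rewrite /lt2 ordlt_irr ltnn; by case: (haspred _ _ _ _). Qed.

Lemma lt2_trans l a : transitive (lt2 delta Ord l a).
Proof.
move=> y x z; rewrite /lt2.
case: (haspred delta l a x); case: (haspred delta l a y); case: (haspred delta l a z) => //=;
 rewrite ?orbF ?orbT //; try apply: ltn_trans; try apply: ordlt_trans.
Qed.

Variables (s1 : {set Q}) (l1 : seq Q) (a : Sigma).
Hypothesis Hl1u : uniq l1.
Hypothesis Hl1Q : {subset l1 <= Qd}.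

Let l2 := (B_trans delta Qd Ord (s1, l1) a).2.
Let t2 := post delta (s1 :|: t_of l1) a :&: Qd.
Let ds q := dsucc delta q a.
Let S k := map ds (take k l1).

Lemma mem_l2 x : (x \in l2) = (x \in t2).
Proof. by rewrite /l2 /= mem_sort mem_enum. Qed.

Lemma uniq_l2 : uniq l2.
Proof. by rewrite /l2 /= sort_uniq enum_uniq. Qed.

Lemma l2_Qd x : x \in l2 -> x \in Qd.
Proof. by rewrite mem_l2 inE => /andP[]. Qed.

Lemma ds_in_l2 q : q \in l1 -> ds q \in l2.
Proof.
move=> Hq; rewrite mem_l2 inE; apply/andP; split; last exact: clos (Hl1Q Hq) (ds_delta q a).
rewrite inE; apply/existsP; exists q; rewrite !inE Hq orbT /=; exact: ds_delta.
Qed.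

Lemma minpred_inj x y : haspred delta l1 a x -> haspred delta l1 a y ->
  minpred delta l1 a x = minpred delta l1 a y -> x = y.
Proof.
move=> Hx Hy E; have /eqP := nth_find x Hx; have /eqP := nth_find x Hy.
rewrite /minpred in E; rewrite E => -> //.
Qed.

Lemma sorted_l2 : sorted (fun x y => (x == y) || lt2 delta Ord l1 a x y) l2.
Proof.
rewrite /l2 /=; apply: (sort_sorted_in (P := fun x => x \in t2)); last first.
  by apply/allP => x; rewrite mem_enum.
move=> x y Hx Hy /=.
have HxQ : x \in Qd by move: Hx; rewrite inE => /andP[].
have HyQ : y \in Qd by move: Hy; rewrite inE => /andP[].
case: (eqVneq x y) => [->|Hne] //=; rewrite /lt2.
case Hpx: (haspred delta l1 a x); case Hpy: (haspred delta l1 a y) => //=; rewrite ?orbF.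
  rewrite -neq_ltn; apply/eqP => E; move: Hne; rewrite (minpred_inj Hpx Hpy E) eqxx //.
case Ex: (Ord x) => [n|]; last by move: (proj1 (OrdNone x) Ex); rewrite HxQ.
case Ey: (Ord y) => [k|]; last by move: (proj1 (OrdNone y) Ey); rewrite HyQ.
rewrite /= -neq_ltn; apply/eqP => E; move: Hne; rewrite (Ordinj HxQ HyQ) ?eqxx // Ex Ey E //.
Qed.

Lemma index_l2 x : x \in l2 -> haspred delta l1 a x ->
  index x l2 = size (undup (S (minpred delta l1 a x))).
Proof.
move=> Hx Hp.
rewrite (index_count (@lt2_irr l1 a) (@lt2_trans l1 a) sorted_l2 uniq_l2 Hx).
rewrite -(count_mem_undup uniq_l2); last first.
  by move=> z /mapP[q /mem_take Hq ->]; apply: ds_in_l2.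
apply: eq_in_count => y Hy /=.
rewrite /lt2 Hp /= !andbF /=.
rewrite -has_pred1 has_map has_take_gen //.
Qed.

Lemma hp_ds q : q \in l1 -> haspred delta l1 a (ds q).
Proof. by move=> Hq; apply/hasP; exists q. Qed.

Lemma minpred_le q : q \in l1 -> minpred delta l1 a (ds q) <= index q l1.
Proof. by move=> Hq; apply: find_le_index. Qed.

Lemma size_S k : k <= size l1 -> size (S k) = k.
Proof. by move=> Hk; rewrite size_map size_takel. Qed.

Lemma undup_S_mono m k : m <= k -> size (undup (S m)) <= size (undup (S k)).
Proof.
move=> Hmk; apply: uniq_leq_size; first exact: undup_uniq.
move=> z; rewrite !mem_undup => /mapP[q Hq ->]; apply: map_f.
by rewrite -(take_takel l1 Hmk) in Hq; apply: mem_take Hq.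
Qed.

Lemma idx_le q : q \in l1 -> index (ds q) l2 <= index q l1.
Proof.
move=> Hq; rewrite index_l2 ?ds_in_l2 ?hp_ds //.
apply: leq_trans (size_undup _) _; rewrite size_map size_take.
have := index_mem q l1; rewrite Hq; have := minpred_le Hq; case: ifP => // Hc H1 H2; move/negbT: Hc; lia.
Qed.

Lemma idx_eq_uniq i x0 : i < size l1 -> uniq (S i.+1) ->
  index (ds (nth x0 l1 i)) l2 = i.
Proof.
move=> Hi Hu; set q := nth x0 l1 i.
have Hq : q \in l1 by apply: mem_nth.
have Hiq : index q l1 = i by rewrite index_uniq.
have Hm : minpred delta l1 a (ds q) = i.
  have := minpred_le Hq; rewrite Hiq leq_eqVlt => /orP[/eqP//|Hlt].
  have Hnf := nth_find x0 (hp_ds Hq); rewrite -/(minpred _ _ _ _) in Hnf.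
  have := nth_uniq x0 (s := S i.+1) _ _ Hu.
  move=> /(_ (minpred delta l1 a (ds q)) i).
  rewrite !size_S ?(leq_trans Hlt) // => /(_ ltac:(lia) ltac:(lia)).
  rewrite !(nth_map x0) ?size_takel ?(leq_trans Hlt) //; try lia.
  rewrite !nth_take //; try lia.
  by rewrite /ds (eqP Hnf) -/q eqxx => /esym/eqP.
rewrite index_l2 ?ds_in_l2 ?hp_ds // Hm undup_id ?size_S //; first lia.
move: Hu; rewrite /S (take_nth x0 Hi) map_rcons rcons_uniq => /andP[]//.
Qed.

Lemma idx_dec i j x0 : i < j -> j < size l1 ->
  index (ds (nth x0 l1 i)) l2 < i -> index (ds (nth x0 l1 j)) l2 < j.
Proof.
move=> Hij Hj Hdec.
have Hnu : ~~ uniq (S i.+1).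
  apply/negP => Hu; move: Hdec; rewrite idx_eq_uniq //; try lia.
have Hnuj : ~~ uniq (S j).
  apply: contra Hnu; rewrite /S => Hu.
  rewrite -(take_takel l1 (_ : i.+1 <= j)) // map_take.
  by move: Hu; rewrite -{1}(cat_take_drop i.+1 (map ds (take j l1))) cat_uniq => /andP[].
have Hq : nth x0 l1 j \in l1 by apply: mem_nth.
rewrite index_l2 ?ds_in_l2 ?hp_ds //.
have H1 := undup_S_mono (minpred_le Hq); rewrite index_uniq // in H1; try lia.
have H2 := uniq_size_uniq (undup_uniq (S j)) (mem_undup (S j)).
rewrite (negPf Hnuj) size_S in H2; try lia.
have H3 := size_undup (S j); rewrite size_S in H3; try lia.
Qed.

End Step.

Definition colfun (T : Type) (D A : pred T) (l : seq T) (k : nat) : nat :=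
  match has D l, has A l with
  | false, true => 2 * (find A l).+1
  | true, false => 2 * (find D l).+1 - 1
  | true, true => minn (2 * (find A l).+1) (2 * (find D l).+1 - 1)
  | false, false => 2 * k + 1
  end.

Lemma oddE1 n : odd (2 * n) = false. Proof. by rewrite oddM. Qed.
Lemma oddE2 n : odd (2 * n.+1 - 1) = true.
Proof. rewrite (_ : 2 * n.+1 - 1 = (2 * n).+1); first by rewrite /= oddM. lia. Qed.
Lemma oddE3 n : odd (2 * n + 1) = true.
Proof. by rewrite addn1 /= oddM. Qed.

Section Col.
Variables (T : Type) (D A : pred T) (l : seq T) (k : nat).
Lemma C1 : 1 <= colfun D A l k.
Proof. rewrite /colfun; case: (has D l); case: (has A l); lia. Qed.
Lemma C2 : ~~ odd (colfun D A l k) -> has A l /\ colfun D A l k = 2 * (find A l).+1.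
Proof.
rewrite /colfun; case: (has D l); case: (has A l) => //; rewrite ?oddE2 ?oddE3 //.
case: leqP => H; rewrite ?oddE2 //.
Qed.
Lemma C3 : has A l -> colfun D A l k <= 2 * (find A l).+1.
Proof. rewrite /colfun => ->; case: (has D l); lia. Qed.
Lemma C4 : has D l -> colfun D A l k <= 2 * (find D l).+1 - 1.
Proof. rewrite /colfun => ->; case: (has A l); lia. Qed.
Lemma C5 : odd (colfun D A l k) ->
  colfun D A l k = 2 * k + 1 \/ (has D l /\ colfun D A l k = 2 * (find D l).+1 - 1).
Proof.
rewrite /colfun; case hD: (has D l); case hA: (has A l).
- case: leqP => H Ho; last by right.
  by move: Ho; rewrite oddE1.
- by right.
- by rewrite oddE1.
- by left.
Qed.
End Col.

Section Main.
Variables (Q Sigma : finType) (q0 : Q) (delta alpha : Q -> Sigma -> Q -> bool)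
  (Qd : {set Q}) (Ord : Q -> option nat).
Hypothesis tot : total_rel delta.
Hypothesis sub : forall q a q', alpha q a q' -> delta q a q'.
Hypothesis inQd : forall q a q', alpha q a q' -> q \in Qd /\ q' \in Qd.
Hypothesis det : forall q a, q \in Qd -> exists q', forall q'', delta q a q'' <-> q'' = q'.
Hypothesis clos : forall q a q', q \in Qd -> delta q a q' -> q' \in Qd.
Hypothesis q0n : q0 \notin Qd.
Hypothesis OrdNone : forall q, Ord q = None <-> q \notin Qd.
Hypothesis Ordinj : forall q1 q2, q1 \in Qd -> q2 \in Qd -> Ord q1 = Ord q2 -> q1 = q2.
Variable w : word Sigma.

Let B := B_DPA delta alpha Qd Ord q0.
Let run n := dpa_run B w n.
Let l n := (run n).2.
Let s n := (run n).1.
Let col n := dpa_color_at B w n.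
Let ds q a := dsucc delta q a.
Let D n q := index (ds q (w n)) (l n.+1) < index q (l n).
Let A n q := [exists q' in t_of (l n.+1), alpha q (w n) q'].

Lemma lS n : l n.+1 = (B_trans delta Qd Ord (s n, l n) (w n)).2.
Proof. by rewrite /l /s -surjective_pairing. Qed.
Lemma sS n : s n.+1 = post delta (s n) (w n) :\: Qd.
Proof. by rewrite /s /run /=; case: (dpa_run B w n). Qed.
Lemma colE n : col n = colfun (D n) (A n) (l n) #|Qd|.
Proof. rewrite /col /D /A /l /dpa_color_at /run /=; by case: (dpa_run B w n). Qed.
Lemma l0 : l 0 = [::]. Proof. by []. Qed.
Lemma s0 : s 0 = [set q0]. Proof. by []. Qed.

Lemma inv n : uniq (l n) /\ {subset l n <= Qd}.
Proof.
case: n => [|n]; first by rewrite l0.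
rewrite lS; split; first exact: uniq_l2.
by move=> x; rewrite mem_l2 inE => /andP[].
Qed.

Lemma memlS n x : (x \in l n.+1) = (x \in post delta (s n :|: t_of (l n)) (w n) :&: Qd).
Proof. by rewrite lS mem_l2. Qed.

Lemma idxS n q : q \in l n -> index (ds q (w n)) (l n.+1) <= index q (l n).
Proof. rewrite lS; have [Hu Hs] := inv n; exact: idx_le. Qed.

Lemma dsS n q : q \in l n -> ds q (w n) \in l n.+1.
Proof. rewrite lS; have [Hu Hs] := inv n; exact: ds_in_l2. Qed.

Lemma decS n i j x0 : i < j -> j < size (l n) ->
  index (ds (nth x0 (l n) i) (w n)) (l n.+1) < i ->
  index (ds (nth x0 (l n) j) (w n)) (l n.+1) < j.
Proof. rewrite lS; have [Hu Hs] := inv n; exact: idx_dec. Qed.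

Lemma size_l n : size (l n) <= #|Qd|.
Proof.
have [Hu Hs] := inv n; rewrite cardE; apply: uniq_leq_size => // x Hx.
by rewrite mem_enum; apply: Hs.
Qed.

Lemma fwd : NBA_accepts q0 delta alpha w -> DPA_accepts B w.
Proof.
move=> [r [[r0 rS] racc]].
have inv1 : forall n, (r n \in Qd -> r n \in l n) /\ (r n \notin Qd -> r n \in s n).
  elim=> [|n [IH1 IH2]].
    rewrite r0 s0; split=> [H|_]; first by move: q0n; rewrite H.
    by rewrite inE.
  split => H.
    rewrite memlS inE H andbT inE; apply/existsP; exists (r n); rewrite rS andbT !inE.
    by case: (boolP (r n \in Qd)) => Hn; [rewrite (IH1 Hn) orbT | rewrite (IH2 Hn)].
  rewrite sS inE H /= inE; apply/existsP; exists (r n); rewrite rS andbT.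
  apply: IH2; apply/negP => Hn; move: H; by rewrite (clos Hn (rS n)).
have [k Hk] : exists k, r k \in Qd.
  by case: (racc 0) => i [_ Ha]; exists i; exact: (inQd Ha).1.
have stay : forall n, k <= n -> r n \in Qd.
  elim=> [|n IH] Hn; first by move: Hn Hk; rewrite leqn0 => /eqP ->.
  case: (leqP k n) => H; first exact: clos (IH H) (rS n).
  by have -> : n.+1 = k by lia.
have rdet : forall n, k <= n -> r n.+1 = ds (r n) (w n).
  by move=> n Hn; apply: (ds_det tot det (stay n Hn) (rS n)).
have rin : forall n, k <= n -> r n \in l n by move=> n Hn; apply: (inv1 n).1; apply: stay.
pose f n := index (r n) (l n).
have fmono : forall n, k <= n -> f n.+1 <= f n.
  by move=> n Hn; rewrite /f rdet //; apply: idxS; apply: rin.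
have [K [HkK HK]] := stab fmono.
set j := f K.
have HjQ : j < #|Qd|.
  apply: leq_trans (size_l K); rewrite /j /f index_mem; exact: rin.
have colodd : forall n, K <= n -> odd (col n) -> 2 * j + 2 < col n.
  move=> n Hn; rewrite colE => Ho; case: (C5 Ho) => [->|[Hd ->]]; first lia.
  suff: j < find (D n) (l n) by lia.
  rewrite ltnNge; apply/negP => Hle.
  have Hsz : find (D n) (l n) < size (l n) by rewrite -has_find.
  have Hdi := nth_find (r n) Hd.
  have Hrn : r n \in l n by apply: rin; lia.
  have Hfj : f n = j by rewrite /j HK.
  have Hfj1 : f n.+1 = j by rewrite /j HK //; lia.
  have Hnj : nth (r n) (l n) j = r n by rewrite -Hfj /f nth_index.
  move: Hle; rewrite leq_eqVlt => /orP[/eqP Eij|Hij].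
    move: Hdi; rewrite Eij Hnj /D -rdet; last lia.
    by rewrite -/(f n.+1) -/(f n) Hfj Hfj1 ltnn.
  move: Hdi; rewrite /D index_uniq //; last exact: (inv n).1.
  move=> Hdi; have := decS (x0 := r n) Hij _ Hdi.
  rewrite Hnj -rdet; last lia.
  rewrite -/(f n.+1) Hfj1 ltnn => H; suff: false by []; apply: H.
  by rewrite -Hfj /f index_mem.
have colsmall : forall n, K <= n -> alpha (r n) (w n) (r n.+1) -> col n <= 2 * j + 2.
  move=> n Hn Ha; rewrite colE.
  have HA : A n (r n).
    apply/exists_inP; exists (r n.+1) => //; rewrite inE; apply: rin; lia.
  have Hh : has (A n) (l n) by apply/hasP; exists (r n) => //; apply: rin; lia.
  have H3 := @C3 _ (D n) (A n) (l n) #|Qd| Hh; apply: leq_trans H3 _.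
  have Hle : find (A n) (l n) <= index (r n) (l n) := find_le_index HA (rin n ltac:(lia)).
  have Hfj : f n = j by rewrite /j HK.
  move: Hle; rewrite -/(f n) Hfj; lia.
have [c [Hc Hio]] : exists c, c < 2 * j + 3 /\ io col c.
  apply: NNPP => Hn.
  have [K' HK'] := ev_ge (f := col) (k := 2 * j + 3)
    (fun c Hc Hio => Hn (ex_intro _ c (conj Hc Hio))).
  case: (racc (maxn K K')) => i [Hi Ha].
  have := colsmall i ltac:(lia) Ha; have := HK' i ltac:(lia); lia.
have [m [Hm Hmin]] := io_min Hio.
exists m; split => //.
apply/negP => Ho.
have Hmc := Hmin c Hio.
case: (Hm K) => i [Hi Hci].
have := colodd i Hi; rewrite Hci => /(_ Ho); lia.
Qed.

Lemma reach n q : (q \in s n) || (q \in l n) -> exists p : nat -> Q,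
  [/\ p 0 = q0, (forall i, i < n -> delta (p i) (w i) (p i.+1)) & p n = q].
Proof.
elim: n q => [|n IH] q.
  rewrite s0 l0 inE orbF => /eqP ->; by exists (fun _ => q0).
move=> Hq.
have [q' Hq' Hd] : exists2 q', (q' \in s n) || (q' \in l n) & delta q' (w n) q.
  move: Hq; rewrite sS memlS !inE => /orP[/andP[_ /existsP[q' /andP[Hq' Hd]]]|
                              /andP[/existsP[q' /andP[Hq' Hd]] _]].
    by exists q' => //; rewrite Hq'.
  by exists q' => //; move: Hq'; rewrite !inE.
have [p [p0 pS pn]] := IH q' Hq'.
exists (fun i => if i <= n then p i else q); split => //.
  move=> i Hi; case: (ltnP i n) => H.
    by rewrite (ltnW H); apply: pS.
  have E : i = n by lia.
  by rewrite E leqnn pn.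
by rewrite ltnn.
Qed.

Lemma bwd : DPA_accepts B w -> NBA_accepts q0 delta alpha w.
Proof.
move=> [m [Hm Hmin Hev]].
have [K HK] : exists K, forall n, K <= n -> m <= col n.
  apply: ev_ge => c Hc Hio; have := Hmin c Hio; lia.
have [n0 [Hn0 Hc0']] := Hm K.
have Hc0 : col n0 = m := Hc0'.
have [HA0 Hfind0] : has (A n0) (l n0) /\ colfun (D n0) (A n0) (l n0) #|Qd| =
    2 * (find (A n0) (l n0)).+1.
  by apply: C2; rewrite -colE Hc0.
set j := find (A n0) (l n0).
have Hmj : m = 2 * j.+1 by rewrite -Hfind0 -colE Hc0.
have jstep : forall n, K <= n -> j < size (l n) ->
    j < size (l n.+1) /\ nth q0 (l n.+1) j = ds (nth q0 (l n) j) (w n).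
  move=> n Hn Hj.
  have Hq : nth q0 (l n) j \in l n by apply: mem_nth.
  have HnD : ~~ D n (nth q0 (l n) j).
    apply/negP => Hd.
    have Hh : has (D n) (l n) by apply/hasP; exists (nth q0 (l n) j).
    have H4 := @C4 _ (D n) (A n) (l n) #|Qd| Hh.
    have := HK n Hn; rewrite colE => H5.
    have Hlt : j < find (D n) (l n) by lia.
    by move: Hd; rewrite (before_find q0 Hlt).
  move: HnD; rewrite /D index_uniq //; last exact: (inv n).1.
  rewrite -leqNgt => Hge.
  have Hle := idxS Hq; rewrite index_uniq // in Hle; last exact: (inv n).1.
  have Heq : index (ds (nth q0 (l n) j) (w n)) (l n.+1) = j by apply/eqP; rewrite eqn_leq Hle Hge.
  have Hin := dsS Hq.
  split; first by rewrite -Heq index_mem.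
  by rewrite -{1}Heq nth_index.
have jall : forall n, n0 <= n -> j < size (l n).
  elim=> [|n IH] Hn.
    by move: Hn; rewrite leqn0 => /eqP <-; rewrite -has_find.
  case: (leqP n0 n) => H; first by apply: (jstep n _ (IH H)).1; lia.
  have -> : n.+1 = n0 by lia.
  by rewrite -has_find.
have Hin0 : (nth q0 (l n0) j \in s n0) || (nth q0 (l n0) j \in l n0).
  by rewrite mem_nth ?orbT // jall.
have [p [p0 pS pn]] := reach Hin0.
pose rho i := if i <= n0 then p i else nth q0 (l i) j.
have rho_ge : forall i, n0 <= i -> rho i = nth q0 (l i) j.
  move=> i Hi; rewrite /rho; case: leqP => H //.
  by have -> : i = n0 by lia.
have rhoS : forall i, n0 <= i -> rho i.+1 = ds (rho i) (w i).
  move=> i Hi; rewrite !rho_ge //; last lia.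
  by apply: (jstep i _ (jall i Hi)).2; lia.
exists rho; split; first split.
- by rewrite /rho leq0n.
- move=> i; case: (ltnP i n0) => Hi.
    by rewrite /rho (ltnW Hi) Hi; apply: pS.
  rewrite rhoS //; exact: ds_delta.
- move=> N; case: (Hm (maxn N (maxn n0 K))) => i [Hi Hci'].
  have Hci : col i = m := Hci'.
  have [HAi Hfi] : has (A i) (l i) /\ colfun (D i) (A i) (l i) #|Qd| =
      2 * (find (A i) (l i)).+1.
    by apply: C2; rewrite -colE Hci Hmj oddM.
  have Hfj : find (A i) (l i) = j.
    have : 2 * (find (A i) (l i)).+1 = 2 * j.+1 by rewrite -Hfi -colE Hci.
    lia.
  have := nth_find q0 HAi; rewrite Hfj => /exists_inP[q' _ Ha].
  exists i; split; first lia.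
  have HQ : nth q0 (l i) j \in Qd by apply: (inv i).2; apply: mem_nth; apply: jall; lia.
  rewrite rhoS; last lia.
  rewrite rho_ge; last lia.
  by have E := ds_det tot det HQ (sub Ha); rewrite /ds -E.
Qed.

End Main.

Theorem mainTheorem3 (Q Sigma : finType) (q0 : Q)
  (delta alpha : Q -> Sigma -> Q -> bool) (Qd : {set Q})
  (Ord : Q -> option nat) :
  is_LDBA q0 delta alpha Qd ->
  is_ordering Qd Ord ->
  forall w : word Sigma,
    NBA_accepts q0 delta alpha w <->
    DPA_accepts (B_DPA delta alpha Qd Ord q0) w.
Proof.
move=> [[tot sub] inQd det clos q0n] [OrdNone _ Ordinj] w.
split=> H; [eapply fwd | eapply bwd]; eauto.
Qed.
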